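(* Let $N,M_s,M_d\ge1$ be integers, $P_s,P_r,\sigma_r^2,\sigma_d^2>0$, $\varepsilon\ge 0$, $\mathbf H_{sr}\in\mathbb C^{N\times M_s}$ and $\tilde{\mathbf H}_{rd}\in\mathbb C^{M_d\times N}$. Consider the problem $$\mathcal P_1:\ \max_{\mathbf W\in\mathbb C^{N\times N},\,\mathbf b\in\mathbb C^{M_s},\,\mathbf r\in\mathbb C^{M_d}}\ \min_{\|\Delta \mathbf H\|_F\leq \varepsilon}\frac{P_s|\mathbf r^H(\tilde {\mathbf H}_{rd}+\Delta \mathbf H)\mathbf W\mathbf H_{sr}\mathbf b|^2}{\sigma_r^2\|\mathbf r^H(\tilde {\mathbf H}_{rd}+\Delta \mathbf H)\mathbf W\|_2^2+\sigma_d^2}$$ subject to $[P_s\mathbf W\mathbf H_{sr}\mathbf b\mathbf b^H\mathbf H_{sr}^H\mathbf W^H+\sigma_r^2\mathbf W\mathbf W^H]_{i,i}\leq P_r$ for $i=1,\dots,N$, $\|\mathbf b\|_2=1$, $\|\mathbf r\|_2=1$ (the minimum being over $\Delta\mathbf H\in\mathbb C^{M_d\times N}$). Let $f^\circ$ be the maximum value and $\mathbf w^\circ$ an optimal solution of $$\max_{\mathbf w\in\mathbb C^N}\ f(\mathbf w)= \|\tilde {\mathbf H}_{rd}\mathbf w\|_2-\varepsilon\|\mathbf w\|_2\quad\text{s.t. } |w_i|\le 1,\ i=1,\dots,N.$$ Then the optimal $(\mathbf W,\mathbf b,\mathbf r)$ of $\mathcal P_1$ are given by $$\mathbf W=\sqrt{\frac{P_r}{\|\mathbf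 H_{sr}\mathbf b\|_2^2(P_s\|\mathbf H_{sr}\mathbf b\|_2^2+\sigma_r^2)}}\,\mathbf w^\circ\mathbf b^{ H}\mathbf H_{sr}^H,\qquad \mathbf b={\bm \nu}(\mathbf H_{sr}^H\mathbf H_{sr}),\qquad \mathbf r=\frac{\tilde {\mathbf H}_{rd}\mathbf w^\circ}{\|\tilde {\mathbf H}_{rd}\mathbf w^\circ\|_2},$$ and the optimal received SNR is $$\text{SNR}=\frac{\tilde P_r^2P_s\|\mathbf H_{sr}\mathbf b\|_2^2\max\{f^\circ, 0\}^2}{\tilde P_r^2\sigma_r^2\max\{f^\circ, 0\}^2+\sigma_d^2},\qquad \tilde P_r=\sqrt{\frac{P_r}{P_s\|\mathbf H_{sr}\mathbf b\|_2^2+\sigma_r^2}}.$$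
   Context: ${\bm \nu}(\mathbf A)$ denotes a unit-norm eigenvector associated with the largest eigenvalue of a Hermitian matrix $\mathbf A$. $[\mathbf A]_{i,i}$ is the $i$-th diagonal entry; $(\cdot)^H$ conjugate transpose; $\|\cdot\|_2$ Euclidean norm; $\|\cdot\|_F$ Frobenius norm; $w_i$ is the $i$-th entry of $\mathbf w$. The setting is a two-hop amplify-and-forward relay: source beamformer $\mathbf b$, relay matrix $\mathbf W$, destination beamformer $\mathbf r$, first-hop channel $\mathbf H_{sr}$, estimated second-hop channel $\tilde{\mathbf H}_{rd}$ with error $\Delta\mathbf H$ bounded by $\varepsilon$, source power $P_s$, per-antenna relay power limit $P_r$, noise variances $\sigma_r^2,\sigma_d^2$. *)

(* Defs.v *)
From HB Require Import structures.
From mathcomp Require Import all_boot all_order all_algebra.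
From mathcomp Require Import reals complex.
Set Implicit Arguments. Unset Strict Implicit. Unset Printing Implicit Defensive.
Import Order.TTheory GRing.Theory Num.Theory.
Local Open Scope ring_scope.

Section Defs.
Variable R : realType.
Local Notation C := R[i].

Definition adjmx m n (A : 'M[C]_(m, n)) : 'M[C]_(n, m) := (map_mx Num.conj A)^T.

Definition fnorm m n (A : 'M[C]_(m, n)) : C :=
  sqrtC (\sum_(i < m) \sum_(j < n) `|A i j| ^+ 2).

Definition sc (A : 'M[C]_(1, 1)) : C := A 0 0.

(* v is a unit-norm eigenvector associated with the largest eigenvalue of
   the Hermitian matrix A, i.e. v = nu(A) *)
Definition top_eigvec n (A : 'M[C]_n) (v : 'cV[C]_n) : Prop :=
  fnorm v = 1 /\
  exists lam : C, A *m v = lam *: v /\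
    (forall (mu : C) (u : 'cV[C]_n), u != 0 -> A *m u = mu *: u -> mu <= lam).

Definition snr (Ms Md N : nat) (Ps sr2 sd2 : C)
  (Hsr : 'M[C]_(N, Ms)) (Hrd : 'M[C]_(Md, N))
  (W : 'M[C]_N) (b : 'cV[C]_Ms) (r : 'cV[C]_Md) (dH : 'M[C]_(Md, N)) : C :=
  Ps * `|sc (adjmx r *m (Hrd + dH) *m W *m Hsr *m b)| ^+ 2 /
  (sr2 * fnorm (adjmx r *m (Hrd + dH) *m W) ^+ 2 + sd2).

Definition feasibleP1 (Ms Md N : nat) (Ps Pr sr2 : C) (Hsr : 'M[C]_(N, Ms))
  (W : 'M[C]_N) (b : 'cV[C]_Ms) (r : 'cV[C]_Md) : Prop :=
  (forall i : 'I_N,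
     (Ps *: (W *m Hsr *m b *m adjmx b *m adjmx Hsr *m adjmx W)
      + sr2 *: (W *m adjmx W)) i i <= Pr)
  /\ fnorm b = 1 /\ fnorm r = 1.

Definition faux (Md N : nat) (eps : C) (Hrd : 'M[C]_(Md, N)) (w : 'cV[C]_N) : C :=
  fnorm (Hrd *m w) - eps * fnorm w.

Definition feasible_aux (N : nat) (w : 'cV[C]_N) : Prop :=
  forall i : 'I_N, `|w i 0| <= 1.

End Defs.

(* Main.v *)
Require Import Defs.
From HB Require Import structures.
From mathcomp Require Import all_boot all_order all_algebra.
From mathcomp Require Import reals complex spectral sesquilinear.
From mathcomp Require Import ring lra.
Import Order.TTheory GRing.Theory Num.Theory.
Local Open Scope ring_scope.
Local Open Scope sesquilinear_scope.

Section Scalar.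
Variable F : realFieldType.

Lemma div_le (a b c d : F) : 0 < b -> 0 < d -> a * d <= c * b -> a / b <= c / d.
Proof. by move=> hb hd h; rewrite ler_pdivlMr // mulrAC ler_pdivrMr. Qed.

Lemma G_mono (Q Ps h sr2 sd2 t s : F) : 0 <= Q -> 0 <= Ps -> 0 <= h -> 0 < sr2 -> 0 < sd2 ->
  0 <= t -> t <= s ->
  Q*Ps*h*t/(Q*sr2*t+sd2) <= Q*Ps*h*s/(Q*sr2*s+sd2).
Proof.
move=> hQ hP hh hs hd ht hts.
have hq : 0 <= Q * Ps * h * sd2 by rewrite !mulr_ge0 // ltW.
have hq2 : 0 <= Q * sr2 by rewrite mulr_ge0 // ltW.
apply: div_le; [nra|nra|].
have : 0 <= Q * Ps * h * sd2 * (s - t) by rewrite mulr_ge0 // subr_ge0.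
nra.
Qed.

Lemma UB (Ps Pr sr2 sd2 hh hb2 t T num den : F) :
  0 < Ps -> 0 < Pr -> 0 < sr2 -> 0 < sd2 -> 0 <= hh -> hh <= hb2 ->
  0 <= t -> t <= T -> 0 <= den -> 0 <= num ->
  (hh != 0 -> num * (Ps * hh + sr2) = hh * Pr * t) -> num <= den * hh ->
  Ps*num/(sr2*den+sd2) <=
  Pr/(Ps*hb2+sr2)*Ps*hb2*T/(Pr/(Ps*hb2+sr2)*sr2*T+sd2).
Proof.
move=> hPs hPr hs hd hh0 hhb ht htT hden hnum enum hnd.
have hb0 : 0 <= hb2 by apply: le_trans hhb.
have hT : 0 <= T by apply: le_trans htT.
have -> : Pr/(Ps*hb2+sr2)*Ps*hb2*T/(Pr/(Ps*hb2+sr2)*sr2*T+sd2) =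
          Ps*Pr*hb2*T/(sr2*Pr*T + sd2*(Ps*hb2+sr2)).
  have p1 : 0 <= Ps * hb2 by rewrite mulr_ge0 // ltW.
  have p2 : 0 <= sr2 * Pr * T by rewrite !mulr_ge0 // ltW.
  have hne : 0 < Ps*hb2+sr2 by lra.
  have p3 : 0 < sd2*(Ps*hb2+sr2) by rewrite mulr_gt0.
  have hne2 : 0 < sr2*Pr*T + sd2*(Ps*hb2+sr2) by lra.
  have p4 : 0 <= Pr/(Ps*hb2+sr2)*sr2*T by rewrite !mulr_ge0 // ?invr_ge0 ltW.
  have hne3 : 0 < Pr/(Ps*hb2+sr2)*sr2*T+sd2 by lra.
  by field; rewrite (lt0r_neq0 hne2) (lt0r_neq0 hne).
have p1 : 0 <= Ps * hb2 by rewrite mulr_ge0 // ltW.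
have p2 : 0 <= sr2 * Pr * T by rewrite !mulr_ge0 // ltW.
have p3 : 0 < sd2*(Ps*hb2+sr2) by rewrite mulr_gt0 //; lra.
have hR : 0 <= Ps*Pr*hb2*T/(sr2*Pr*T + sd2*(Ps*hb2+sr2)).
  by rewrite !mulr_ge0 ?invr_ge0 // ?ltW //; lra.
have [hz|hpos] := eqVneq hh 0.
  have -> : num = 0 by apply/eqP; rewrite eq_le hnum andbT -(mulr0 den) -hz.
  by rewrite mulr0 mul0r.
have hp : 0 < hh by rewrite lt_def hpos.
move/(_ hpos): enum => enum.
have pd : 0 < sr2 * den + sd2.
  have : 0 <= sr2 * den by rewrite mulr_ge0 // ltW.
  lra.
have pn : 0 < sr2 * num + sd2 * hh.
  have : 0 <= sr2 * num by rewrite mulr_ge0 // ltW.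
  have : 0 < sd2 * hh by rewrite mulr_gt0.
  lra.
have pt : 0 < sr2 * Pr * t + sd2 * (Ps * hh + sr2).
  have : 0 <= sr2 * Pr * t by rewrite !mulr_ge0 // ltW.
  have e1 : 0 <= Ps * hh by rewrite mulr_ge0 // ltW.
  have : 0 < sd2 * (Ps * hh + sr2) by apply: mulr_gt0 => //; lra.
  lra.
apply: (@le_trans _ _ (Ps*num*hh/(sr2*num+sd2*hh))).
  apply: div_le => //.
  have e1 : 0 <= Ps * num * sr2 by rewrite !mulr_ge0 // ltW.
  have e2 : 0 <= den * hh - num by rewrite subr_ge0.
  have := mulr_ge0 e1 e2.
  nra.
apply: (@le_trans _ _ (Ps*Pr*hh*t/(sr2*Pr*t + sd2*(Ps*hh+sr2)))).
  apply: div_le => //.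
  have -> : Ps * num * hh * (sr2 * Pr * t + sd2 * (Ps * hh + sr2)) =
    Ps * num * hh * sr2 * Pr * t + Ps * hh * sd2 * (num * (Ps * hh + sr2)) by ring.
  rewrite enum; lra.
have f1 : 0 <= Ps*Pr*sr2*Pr*t*T by rewrite !mulr_ge0 // ltW.
have f2 : 0 <= Ps*Pr*hh*hb2*sd2*Ps by rewrite !mulr_ge0 // ltW.
have f3 : 0 <= Ps*Pr*sd2*sr2 by rewrite !mulr_ge0 // ltW.
have g1 : 0 <= hb2 - hh by rewrite subr_ge0.
have g2 : 0 <= T - t by rewrite subr_ge0.
have q1 := mulr_ge0 f1 g1.
have q2 := mulr_ge0 f2 g2.
have q3 : 0 <= Ps*Pr*sd2*sr2*(hb2*T - hh*t).
  by apply: mulr_ge0 => //; rewrite subr_ge0; apply: ler_pM.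
have pT : 0 < sr2 * Pr * T + sd2 * (Ps * hb2 + sr2) by lra.
apply: div_le => //.
nra.
Qed.

Lemma G_eq (Ps Pr sr2 sd2 hb2 tx : F) : 0 < Ps -> 0 < Pr -> 0 < sr2 -> 0 < sd2 ->
  0 <= hb2 -> 0 <= tx ->
  Ps * (Pr / (hb2 * (Ps * hb2 + sr2)) * tx * hb2 ^+ 2) /
    (sr2 * (Pr / (hb2 * (Ps * hb2 + sr2)) * tx * hb2) + sd2) =
  Pr / (Ps * hb2 + sr2) * Ps * hb2 * tx / (Pr / (Ps * hb2 + sr2) * sr2 * tx + sd2).
Proof.
move=> hPs hPr hs hd hb ht.
have [->|hn] := eqVneq hb2 0; first by rewrite !(mulr0, mul0r, expr0n).
have hp : 0 < hb2 by rewrite lt_def hn.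
have e1 : 0 < Ps * hb2 + sr2 by have := mulr_gt0 hPs hp; lra.
have e2 : 0 <= Pr / (Ps * hb2 + sr2) * sr2 * tx.
  by rewrite !mulr_ge0 // ?invr_ge0 ltW.
have e3 : 0 < Pr / (Ps * hb2 + sr2) * sr2 * tx + sd2 by lra.
have -> : Pr / (hb2 * (Ps * hb2 + sr2)) * tx * hb2 = Pr / (Ps * hb2 + sr2) * tx.
  by field; rewrite hn (lt0r_neq0 e1).
have -> : Ps * (Pr / (hb2 * (Ps * hb2 + sr2)) * tx * hb2 ^+ 2) =
   Ps * (Pr / (Ps * hb2 + sr2) * tx) * hb2.
  by field; rewrite hn (lt0r_neq0 e1).
by congr (_ / _); [ring | ring].
Qed.

Lemma feasF (Ps Pr sr2 hb2 a : F) : 0 < Ps -> 0 < Pr -> 0 < sr2 ->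
  0 <= hb2 -> 0 <= a -> a <= 1 ->
  Ps * (Pr / (hb2 * (Ps * hb2 + sr2)) * a * hb2 ^+ 2) +
  sr2 * (Pr / (hb2 * (Ps * hb2 + sr2)) * a * hb2) <= Pr.
Proof.
move=> hPs hPr hs hb ha ha1.
have [->|hn] := eqVneq hb2 0; first by rewrite !(mulr0, mul0r, expr0n, addr0) ltW.
have hp : 0 < hb2 by rewrite lt_def hn.
have e1 : 0 < Ps * hb2 + sr2 by have := mulr_gt0 hPs hp; lra.
have -> : Ps * (Pr / (hb2 * (Ps * hb2 + sr2)) * a * hb2 ^+ 2) +
  sr2 * (Pr / (hb2 * (Ps * hb2 + sr2)) * a * hb2) = Pr * a.
  by field; rewrite hn (lt0r_neq0 e1).
nra.
Qed.

Lemma S6 (Ps Pr sr2 hh y z : F) : 0 < Ps -> 0 < Pr -> 0 < sr2 -> 0 < hh ->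
  0 <= y -> 0 <= z -> Ps * y + sr2 * z <= Pr -> y <= z * hh ->
  y <= hh * Pr / (Ps * hh + sr2).
Proof.
move=> hPs hPr hs hh0 hy hz h1 h2.
have e1 : 0 < Ps * hh + sr2 by have := mulr_gt0 hPs hh0; lra.
rewrite ler_pdivlMr //.
have : Ps * y * hh + sr2 * z * hh <= Pr * hh.
  by rewrite -mulrDl ler_wpM2r // ltW.
have : sr2 * y <= sr2 * (z * hh) by rewrite ler_wpM2l // ltW.
nra.
Qed.

End Scalar.

Section Basics.
Variable R : realType.
Local Notation C := R[i].
Local Notation rc := (real_complex R).
Local Notation CRe := (@complex.Re R).

Lemma adjmxE m n (A : 'M[C]_(m, n)) i j : adjmx A i j = (A j i)^*.
Proof. by rewrite /adjmx !mxE. Qed.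

Lemma adjmx_mul m n p (A : 'M[C]_(m, n)) (B : 'M[C]_(n, p)) :
  adjmx (A *m B) = adjmx B *m adjmx A.
Proof. by rewrite /adjmx map_mxM trmx_mul. Qed.

Lemma adjmxK m n (A : 'M[C]_(m, n)) : adjmx (adjmx A) = A.
Proof. by apply/matrixP => i j; rewrite !adjmxE conjCK. Qed.

Lemma adjmxD m n (A B : 'M[C]_(m, n)) : adjmx (A + B) = adjmx A + adjmx B.
Proof. by apply/matrixP => i j; rewrite !mxE rmorphD. Qed.

Lemma adjmxZ m n (k : C) (A : 'M[C]_(m, n)) : adjmx (k *: A) = k^* *: adjmx A.
Proof. by apply/matrixP => i j; rewrite !mxE rmorphM. Qed.

Lemma fnorm_ge0 m n (A : 'M[C]_(m, n)) : 0 <= fnorm A.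
Proof.
by rewrite /fnorm sqrtC_ge0 sumr_ge0 // => i _; rewrite sumr_ge0 // => j _; rewrite exprn_ge0.
Qed.

Lemma fnorm_sq m n (A : 'M[C]_(m, n)) :
  fnorm A ^+ 2 = \sum_(i < m) \sum_(j < n) `|A i j| ^+ 2.
Proof. by rewrite /fnorm sqrtCK. Qed.

Lemma fnorm_sqc n (v : 'cV[C]_n) : fnorm v ^+ 2 = \sum_(i < n) `|v i 0| ^+ 2.
Proof. by rewrite fnorm_sq; apply: eq_bigr => i _; rewrite big_ord1. Qed.

Lemma fnorm_sqr n (v : 'rV[C]_n) : fnorm v ^+ 2 = \sum_(i < n) `|v 0 i| ^+ 2.
Proof. by rewrite fnorm_sq big_ord1. Qed.



Lemma sqr_inj (x y : C) : 0 <= x -> 0 <= y -> x ^+ 2 = y ^+ 2 -> x = y.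
Proof. by move=> hx hy e; apply: (pexpIrn (n:=2)) => //; rewrite nnegrE. Qed.

Lemma fnormZ m n (k : C) (A : 'M[C]_(m, n)) : fnorm (k *: A) = `|k| * fnorm A.
Proof.
apply: sqr_inj; rewrite ?mulr_ge0 ?fnorm_ge0 //.
rewrite exprMn !fnorm_sq mulr_sumr; apply: eq_bigr => i _.
rewrite mulr_sumr; apply: eq_bigr => j _; by rewrite mxE normrM exprMn.
Qed.

Lemma sc_adj n (a b : 'cV[C]_n) : sc (adjmx a *m b) = \sum_i (a i 0)^* * b i 0.
Proof. by rewrite /sc mxE; apply: eq_bigr => i _; rewrite adjmxE. Qed.

Lemma CS n (a b : 'cV[C]_n) : `|sc (adjmx a *m b)| <= fnorm a * fnorm b.
Proof.
have key : `|dotmx (b^T) (a^T)| <= sqrtC (dotmx b^T b^T) * sqrtC (dotmx a^T a^T).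
  exact: (@CauchySchwarz_sqrt C _ (@dotmx C n) (b^T) (a^T)).1.
move: key; rewrite !dotmxE !mxE.
have -> : \sum_j (b^T 0 j * (a^T ^t* ) j 0) = (sc (adjmx a *m b)).
  by rewrite sc_adj; apply: eq_bigr => i _; rewrite !mxE mulrC.
suff E : forall v : 'cV[C]_n, sqrtC (\sum_j v^T 0 j * (v^T ^t* ) j 0) = fnorm v.
  by rewrite !E mulrC.
move=> v; rewrite /fnorm; congr sqrtC; apply: eq_bigr => i _.
by rewrite big_ord1 !mxE normCK.
Qed.

Lemma fnorm_adj m n (A : 'M[C]_(m, n)) : fnorm (adjmx A) = fnorm A.
Proof.
rewrite /fnorm exchange_big; congr sqrtC; apply: eq_bigr => i _.
by apply: eq_bigr => j _; rewrite adjmxE norm_conjC.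
Qed.

Lemma sc_norm n (v : 'cV[C]_n) : sc (adjmx v *m v) = fnorm v ^+ 2.
Proof.
rewrite sc_adj fnorm_sqc; apply: eq_bigr => i _.
by rewrite normCK mulrC.
Qed.

Lemma fnorm_outer m n (a : 'cV[C]_m) (w : 'cV[C]_n) :
  fnorm (a *m adjmx w) = fnorm a * fnorm w.
Proof.
apply: sqr_inj; rewrite ?mulr_ge0 ?fnorm_ge0 //.
rewrite exprMn fnorm_sq !fnorm_sqc mulr_suml; apply: eq_bigr => i _.
rewrite mulr_sumr; apply: eq_bigr => j _.
by rewrite !mxE big_ord1 adjmxE normrM norm_conjC exprMn.
Qed.

Lemma sqrtC_le (x y : C) : 0 <= x -> 0 <= y -> x ^+ 2 <= y ^+ 2 -> x <= y.
Proof. by move=> hx hy; rewrite ler_sqr ?nnegrE. Qed.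

Lemma CS2 m n (r : 'cV[C]_m) (D : 'M[C]_(m, n)) :
  fnorm (adjmx r *m D) <= fnorm r * fnorm D.
Proof.
apply: sqrtC_le; rewrite ?mulr_ge0 ?fnorm_ge0 //.
rewrite fnorm_sqr exprMn [fnorm D ^+ 2]fnorm_sq exchange_big mulr_sumr.
apply: ler_sum => j _.
have -> : (adjmx r *m D) 0 j = sc (adjmx r *m col j D).
  by rewrite /sc !mxE; apply: eq_bigr => i _; rewrite !mxE.
have -> : \sum_(i < m) `|D i j| ^+ 2 = fnorm (col j D) ^+ 2.
  by rewrite fnorm_sqc; apply: eq_bigr => i _; rewrite mxE.
rewrite -exprMn ler_sqr ?nnegrE ?mulr_ge0 ?fnorm_ge0 //; exact: CS.
Qed.

Lemma CS3 m n (r : 'cV[C]_m) (D : 'M[C]_(m, n)) (w : 'cV[C]_n) :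
  `|sc (adjmx r *m D *m w)| <= fnorm r * fnorm D * fnorm w.
Proof.
have -> : adjmx r *m D = adjmx (adjmx D *m r) by rewrite adjmx_mul adjmxK.
apply: (le_trans (CS _ _ _)); rewrite ler_wpM2r ?fnorm_ge0 //.
by rewrite -fnorm_adj adjmx_mul adjmxK CS2.
Qed.

Lemma diag_entry N Ms (Ps sr2 : C) (Hsr : 'M[C]_(N, Ms)) (W : 'M[C]_N) (b : 'cV[C]_Ms) i :
  (Ps *: (W *m Hsr *m b *m adjmx b *m adjmx Hsr *m adjmx W)
      + sr2 *: (W *m adjmx W)) i i =
  Ps * `|(W *m (Hsr *m b)) i 0| ^+ 2 + sr2 * \sum_j `|W i j| ^+ 2.
Proof.
have -> : W *m Hsr *m b *m adjmx b *m adjmx Hsr *m adjmx W =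
   (W *m (Hsr *m b)) *m adjmx (W *m (Hsr *m b)).
  by rewrite !adjmx_mul !mulmxA.
set h := W *m (Hsr *m b).
rewrite !mxE big_ord1 adjmxE -normCK; congr (_ + _ * _).
  by rewrite /h mxE.
by apply: eq_bigr => j _; rewrite adjmxE normCK.
Qed.

Lemma adjmx_tc m n (A : 'M[C]_(m, n)) : A ^t* = adjmx A.
Proof. by rewrite /adjmx map_trmx. Qed.

Lemma gram_normal m n (H : 'M[C]_(m, n)) : adjmx H *m H \is normalmx.
Proof.
by rewrite qualifE /= adjmx_tc adjmx_mul adjmxK.
Qed.

Lemma spec_bound n (A : 'M[C]_n) lam : A \is normalmx ->
  (forall mu (u : 'cV[C]_n), u != 0 -> A *m u = mu *: u -> mu <= lam) ->
  forall u, sc (adjmx u *m A *m u) <= lam * fnorm u ^+ 2.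
Proof.
move=> /orthomx_spectralP; set P := spectralmx A; set d := spectral_diag A => eA hlam u.
have PU : P \is unitarymx by apply: spectral_unitarymx.
have PPt : P *m adjmx P = 1%:M by have /unitarymxP := PU; rewrite adjmx_tc.
have PtP : adjmx P *m P = 1%:M by apply: mulmx1C.
have iP : invmx P = adjmx P by rewrite invmx_unitary // adjmx_tc.
rewrite iP in eA.
have dle : forall j, d 0 j <= lam.
  move=> j; apply: (hlam _ (col j (adjmx P))).
    apply/negP => /eqP c0.
    have : P *m col j (adjmx P) = col j 1%:M by rewrite !colE mulmxA PPt.
    rewrite c0 mulmx0 => /matrixP /(_ j 0); rewrite !mxE eqxx /= => /eqP.
    by rewrite eq_sym oner_eq0.
  rewrite eA colE -!mulmxA (mulmxA P) PPt mul1mx.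
  have -> : diag_mx d *m delta_mx j (0 : 'I_1) = d 0 j *: delta_mx j 0.
    apply/matrixP => i k; rewrite mul_diag_mx !mxE.
    by case: (eqVneq i j) => [->|ne]; rewrite ?mulr1 ?mulr0.
  by rewrite -scalemxAr.
set v := P *m u.
have -> : adjmx u *m A *m u = adjmx v *m diag_mx d *m v.
  by rewrite eA /v adjmx_mul !mulmxA.
have -> : fnorm u ^+ 2 = fnorm v ^+ 2.
  by rewrite -!sc_norm /v adjmx_mul -mulmxA (mulmxA (adjmx P)) PtP mul1mx.
rewrite fnorm_sqc mulr_sumr /sc mxE; apply: ler_sum => j _.
rewrite mul_mx_diag !mxE; set z := \sum_j0 _.
rewrite normCK [z^* * _]mulrC -mulrA [z^* * z]mulrC.
by rewrite ler_wpM2r ?dle // -normCK exprn_ge0.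
Qed.

Lemma sc_scale (k : C) (A : 'M[C]_1) : sc (k *: A) = k * sc A.
Proof. by rewrite /sc mxE. Qed.

Lemma snr_rank1 N Ms Md (Ps sr2 sd2 k : C) (Hsr : 'M[C]_(N, Ms)) (Hrd : 'M[C]_(Md, N))
  (w0 : 'cV[C]_N) (b : 'cV[C]_Ms) (r : 'cV[C]_Md) (dH : 'M[C]_(Md, N)) :
  snr Ps sr2 sd2 Hsr Hrd (k *: (w0 *m adjmx b *m adjmx Hsr)) b r dH =
  Ps * (`|k| ^+ 2 * `|sc (adjmx r *m (Hrd + dH) *m w0)| ^+ 2 * (fnorm (Hsr *m b) ^+ 2) ^+ 2)
  / (sr2 * (`|k| ^+ 2 * `|sc (adjmx r *m (Hrd + dH) *m w0)| ^+ 2 * fnorm (Hsr *m b) ^+ 2) + sd2).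
Proof.
rewrite /snr; set x := sc (adjmx r *m (Hrd + dH) *m w0); set h := Hsr *m b.
have E : adjmx r *m (Hrd + dH) *m (k *: (w0 *m adjmx b *m adjmx Hsr)) = (k * x) *: adjmx h.
  rewrite -scalemxAr !mulmxA (mx11_scalar (adjmx r *m (Hrd + dH) *m w0)) -/x.
  rewrite mul_scalar_mx -!scalemxAl -mulmxA -adjmx_mul scalerA.
  by rewrite /x /sc mulmxA.
rewrite E fnormZ fnorm_adj -!scalemxAl sc_scale -mulmxA sc_norm.
by rewrite !normrM !exprMn (ger0_norm (fnorm_ge0 _ _ h)).
Qed.

Lemma sc_mul11 (A B : 'M[C]_1) : sc (A *m B) = sc A * sc B.
Proof. by rewrite /sc mxE big_ord1. Qed.

Lemma sc_add (A B : 'M[C]_1) : sc (A + B) = sc A + sc B.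
Proof. by rewrite /sc mxE. Qed.

Lemma x_pert m n (H : 'M[C]_(m, n)) (r : 'cV[C]_m) (w : 'cV[C]_n) (a : C) :
  fnorm r = 1 ->
  sc (adjmx r *m (H + a *: (r *m adjmx w)) *m w) =
  sc (adjmx r *m H *m w) + a * fnorm w ^+ 2.
Proof.
move=> r1; rewrite mulmxDr mulmxDl sc_add; congr (_ + _).
rewrite -scalemxAr -scalemxAl sc_scale; congr (_ * _).
by rewrite !mulmxA -(mulmxA (adjmx r *m r)) sc_mul11 !sc_norm r1 expr1n mul1r.
Qed.

Lemma choose_dH m n (H : 'M[C]_(m, n)) (r : 'cV[C]_m) (w : 'cV[C]_n) (eps : C) :
  fnorm r = 1 -> 0 <= eps ->
  exists dH : 'M[C]_(m, n), fnorm dH <= eps /\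
   ((eps * fnorm w <= `|sc (adjmx r *m H *m w)| /\
     `|sc (adjmx r *m (H + dH) *m w)| = `|sc (adjmx r *m H *m w)| - eps * fnorm w) \/
    (`|sc (adjmx r *m H *m w)| <= eps * fnorm w /\ sc (adjmx r *m (H + dH) *m w) = 0)).
Proof.
move=> r1 he; set z := sc (adjmx r *m H *m w); set nw := fnorm w.
have nw0 : 0 <= nw := fnorm_ge0 _ _ w.
pose p : C := if z == 0 then 1 else z / `|z|.
have zp : z = `|z| * p.
  rewrite /p; case: eqP => [->|nz]; first by rewrite normr0 mul0r.
  by rewrite mulrC divfK // normr_eq0; apply/eqP.
have p1 : `|p| = 1.
  rewrite /p; case: eqP => [_|nz]; first by rewrite normr1.
  by rewrite normf_div normr_id divff // normr_eq0; apply/eqP.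
pose D (c : C) := (- (c * p / nw)) *: (r *m adjmx w).
have xD : forall c, sc (adjmx r *m (H + D c) *m w) = (`|z| - c * nw) * p.
  move=> c; rewrite x_pert // -/z -/nw.
  have [->|nwn0] := eqVneq nw 0; first by rewrite {1}zp; ring.
  by rewrite {1}zp; field.
have fD : forall c, 0 <= c -> fnorm (D c) <= c.
  move=> c hc; rewrite fnormZ fnorm_outer r1 mul1r -/nw normrN !normrM p1 mulr1.
  rewrite normfV (ger0_norm hc) (ger0_norm nw0).
  have [->|nwn0] := eqVneq nw 0; first by rewrite !mulr0.
  by rewrite -mulrA mulVf // mulr1.
have zr : `|z| \is Num.real by apply: normr_real.
have er : eps * nw \is Num.real by apply: ger0_real; apply: mulr_ge0.
case/orP: (real_leVge er zr) => hcase.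
  exists (D eps); split; first exact: fD.
  left; split => //; rewrite xD normrM p1 mulr1 ger0_norm // subr_ge0 //.
exists (D (`|z| / nw)); split.
  apply: le_trans (fD _ _) _; first by rewrite divr_ge0.
  have [->|nwn0] := eqVneq nw 0; first by rewrite invr0 mulr0.
  by rewrite ler_pdivrMr // lt_def nwn0 nw0.
right; split => //; rewrite xD.
have [e0|nwn0] := eqVneq nw 0.
  have : `|z| <= 0 by rewrite -(mulr0 eps) -e0.
  by rewrite normr_le0 => /eqP ->; rewrite normr0; ring.
by rewrite divfK // subrr mul0r.
Qed.

Lemma eRe (x : C) : 0 <= x -> rc (CRe x) = x.
Proof. by move=> hx; apply: RRe_real; apply: ger0_real. Qed.

Lemma eRe2 (x : C) : 0 <= x ->
  (complex_real_complex_def__canonical__GRing_RMorphism R : {rmorphism R -> C}) (CRe x) = x.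
Proof. exact: eRe. Qed.

Lemma le_Re (x y : C) : x <= y -> CRe x <= CRe y.
Proof. by rewrite lecE => /andP[]. Qed.

Lemma lt_Re (x y : C) : x < y -> CRe x < CRe y.
Proof. by rewrite ltcE => /andP[]. Qed.

Arguments le_Re {x y}.
Arguments lt_Re {x y}.

Lemma G_monoC (Q Ps h sr2 sd2 t s : C) : 0 <= Q -> 0 <= Ps -> 0 <= h -> 0 < sr2 -> 0 < sd2 ->
  0 <= t -> t <= s ->
  Q*Ps*h*t/(Q*sr2*t+sd2) <= Q*Ps*h*s/(Q*sr2*s+sd2).
Proof.
move=> hQ hP hh hs hd ht hts.
have hs0 : 0 <= s := le_trans ht hts.
have := @G_mono R _ _ _ _ _ _ _ (le_Re hQ) (le_Re hP) (le_Re hh) (lt_Re hs) (lt_Re hd) (le_Re ht) (le_Re hts).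
rewrite -lecR !(rmorphM, rmorphD, fmorphV).
by rewrite !eRe2 // ltW.
Qed.

Ltac pushrc := rewrite ?(rmorphM, rmorphD, fmorphV, rmorphXn) ?eRe ?eRe2; try done; try (apply: ltW; done).

Lemma UBC (Ps Pr sr2 sd2 hh hb2 t T num den : C) :
  0 < Ps -> 0 < Pr -> 0 < sr2 -> 0 < sd2 -> 0 <= hh -> hh <= hb2 ->
  0 <= t -> t <= T -> 0 <= den -> 0 <= num ->
  (hh != 0 -> num * (Ps * hh + sr2) = hh * Pr * t) -> num <= den * hh ->
  Ps*num/(sr2*den+sd2) <=
  Pr/(Ps*hb2+sr2)*Ps*hb2*T/(Pr/(Ps*hb2+sr2)*sr2*T+sd2).
Proof.
move=> hPs hPr hs hd hh0 hhb ht htT hden hnum enum hnd.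
have hb0 : 0 <= hb2 := le_trans hh0 hhb.
have hT : 0 <= T := le_trans ht htT.
have E : CRe hh != 0 -> CRe num * (CRe Ps * CRe hh + CRe sr2) = CRe hh * CRe Pr * CRe t.
  move=> hn; apply: complexI; pushrc; apply: enum.
  by apply: contra hn => /eqP ->.
have h1 : CRe num <= CRe den * CRe hh by rewrite -lecR; pushrc.
have := @UB R _ _ _ _ _ _ _ _ _ _ (lt_Re hPs) (lt_Re hPr) (lt_Re hs) (lt_Re hd) (le_Re hh0)
  (le_Re hhb) (le_Re ht) (le_Re htT) (le_Re hden) (le_Re hnum) E h1.
by rewrite -lecR; pushrc.
Qed.

Lemma G_eqC (Ps Pr sr2 sd2 hb2 tx : C) : 0 < Ps -> 0 < Pr -> 0 < sr2 -> 0 < sd2 ->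
  0 <= hb2 -> 0 <= tx ->
  Ps * (Pr / (hb2 * (Ps * hb2 + sr2)) * tx * hb2 ^+ 2) /
    (sr2 * (Pr / (hb2 * (Ps * hb2 + sr2)) * tx * hb2) + sd2) =
  Pr / (Ps * hb2 + sr2) * Ps * hb2 * tx / (Pr / (Ps * hb2 + sr2) * sr2 * tx + sd2).
Proof.
move=> hPs hPr hs hd hb ht.
have := @G_eq R _ _ _ _ _ _ (lt_Re hPs) (lt_Re hPr) (lt_Re hs) (lt_Re hd) (le_Re hb) (le_Re ht).
by move/(congr1 rc); pushrc.
Qed.

Lemma feasC (Ps Pr sr2 hb2 a : C) : 0 < Ps -> 0 < Pr -> 0 < sr2 ->
  0 <= hb2 -> 0 <= a -> a <= 1 ->
  Ps * (Pr / (hb2 * (Ps * hb2 + sr2)) * a * hb2 ^+ 2) +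
  sr2 * (Pr / (hb2 * (Ps * hb2 + sr2)) * a * hb2) <= Pr.
Proof.
move=> hPs hPr hs hb ha ha1.
have := @feasF R _ _ _ _ _ (lt_Re hPs) (lt_Re hPr) (lt_Re hs) (le_Re hb) (le_Re ha) (le_Re ha1).
by rewrite -lecR; pushrc.
Qed.

Lemma S6C (Ps Pr sr2 hh y z : C) : 0 < Ps -> 0 < Pr -> 0 < sr2 -> 0 < hh ->
  0 <= y -> 0 <= z -> Ps * y + sr2 * z <= Pr -> y <= z * hh ->
  y <= hh * Pr / (Ps * hh + sr2).
Proof.
move=> hPs hPr hs hh0 hy hz h1 h2.
have h1' : CRe Ps * CRe y + CRe sr2 * CRe z <= CRe Pr by rewrite -lecR; pushrc.
have h2' : CRe y <= CRe z * CRe hh by rewrite -lecR; pushrc.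
have := @S6 R _ _ _ _ _ _ (lt_Re hPs) (lt_Re hPr) (lt_Re hs) (lt_Re hh0) (le_Re hy) (le_Re hz) h1' h2'.
by rewrite -lecR; pushrc.
Qed.

Lemma fnorm_eq0c n (v : 'cV[C]_n) : fnorm v = 0 -> v = 0.
Proof.
move=> h; have h2 : \sum_(i < n) `|v i 0| ^+ 2 = 0 by rewrite -fnorm_sqc h expr0n.
apply/matrixP => i j; rewrite ord1 mxE.
have := psumr_eq0P (fun i _ => exprn_ge0 2 (normr_ge0 (v i 0))) h2 (i := i) isT.
by move/eqP; rewrite expf_eq0 /= normr_eq0 => /eqP.
Qed.

End Basics.

Theorem theorem1 (R : realType) (N Ms Md : nat)
  (Ps Pr sr2 sd2 eps : R[i])
  (Hsr : 'M[R[i]]_(N, Ms)) (Hrd : 'M[R[i]]_(Md, N))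
  (w0 : 'cV[R[i]]_N) (f0 : R[i]) (b : 'cV[R[i]]_Ms) :
  (0 < N)%N -> (0 < Ms)%N -> (0 < Md)%N ->
  0 < Ps -> 0 < Pr -> 0 < sr2 -> 0 < sd2 -> 0 <= eps ->
  (* w0 is an optimal solution, f0 the maximum value, of max f(w) s.t. |w_i| <= 1 *)
  feasible_aux w0 ->
  (forall w : 'cV[R[i]]_N, feasible_aux w -> faux eps Hrd w <= faux eps Hrd w0) ->
  f0 = faux eps Hrd w0 ->
  (* r below is well defined *)
  Hrd *m w0 != 0 ->
  (* b = nu(Hsr^H Hsr) *)
  top_eigvec (adjmx Hsr *m Hsr) b ->
  let hb2 := fnorm (Hsr *m b) ^+ 2 in
  let W := sqrtC (Pr / (hb2 * (Ps * hb2 + sr2))) *: (w0 *m adjmx b *m adjmx Hsr) in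
  let r := (fnorm (Hrd *m w0))^-1 *: (Hrd *m w0) in
  let Prt := sqrtC (Pr / (Ps * hb2 + sr2)) in
  let fp := Num.max f0 0 in
  let SNR := Prt ^+ 2 * Ps * hb2 * fp ^+ 2 / (Prt ^+ 2 * sr2 * fp ^+ 2 + sd2) in
  (* (W, b, r) is feasible for P1 *)
  feasibleP1 Ps Pr sr2 Hsr W b r /\
  (* its worst-case SNR over ||dH||_F <= eps is exactly SNR (minimum attained) *)
  (forall dH : 'M[R[i]]_(Md, N), fnorm dH <= eps ->
     SNR <= snr Ps sr2 sd2 Hsr Hrd W b r dH) /\
  (exists dH : 'M[R[i]]_(Md, N), fnorm dH <= eps /\
     snr Ps sr2 sd2 Hsr Hrd W b r dH = SNR) /\
  (* no feasible (W', b', r') has a larger worst-case SNR *)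
  (forall (W' : 'M[R[i]]_N) (b' : 'cV[R[i]]_Ms) (r' : 'cV[R[i]]_Md),
     feasibleP1 Ps Pr sr2 Hsr W' b' r' ->
     exists dH : 'M[R[i]]_(Md, N), fnorm dH <= eps /\
       snr Ps sr2 sd2 Hsr Hrd W' b' r' dH <= SNR).
Proof.
move=> hN hMs hMd hPs hPr hsr hsd heps hw0 hopt ef0 Hw0n0 [b1 [lam [Ab hlam]]].
move=> hb2 W r Prt fp SNR.
have hb2_0 : 0 <= hb2 by rewrite /hb2 exprn_ge0 // fnorm_ge0.
have hb2_lam : hb2 = lam.
  rewrite /hb2 -sc_norm adjmx_mul -mulmxA (mulmxA (adjmx Hsr)) Ab.
  by rewrite -scalemxAr sc_scale sc_norm b1 expr1n mulr1.
have hbound : forall b' : 'cV[R[i]]_Ms, fnorm b' = 1 -> fnorm (Hsr *m b') ^+ 2 <= hb2.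
  move=> b' hb'; rewrite hb2_lam -sc_norm adjmx_mul.
  have := spec_bound _ _ _ _ (gram_normal _ _ _ Hsr) hlam b'.
  by rewrite hb' expr1n mulr1 !mulmxA.
have hPh : 0 < Ps * hb2 + sr2.
  by apply: (lt_le_trans hsr); rewrite lerDr mulr_ge0 // ltW.
set Q := Pr / (Ps * hb2 + sr2).
have hQ : 0 <= Q by rewrite divr_ge0 // ltW.
have eSNR : SNR = Q * Ps * hb2 * fp ^+ 2 / (Q * sr2 * fp ^+ 2 + sd2).
  by rewrite /SNR /Prt sqrtCK.
set K := Pr / (hb2 * (Ps * hb2 + sr2)).
have hK : 0 <= K by apply: divr_ge0; [apply: ltW | apply: mulr_ge0 => //; apply: ltW].
have nk : `|sqrtC K| ^+ 2 = K by rewrite ger0_norm ?sqrtC_ge0 // sqrtCK.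
have snrW : forall dH, snr Ps sr2 sd2 Hsr Hrd W b r dH =
   Q * Ps * hb2 * `|sc (adjmx r *m (Hrd + dH) *m w0)| ^+ 2 /
   (Q * sr2 * `|sc (adjmx r *m (Hrd + dH) *m w0)| ^+ 2 + sd2).
  move=> dH; rewrite /W snr_rank1 nk -/hb2.
  by apply: G_eqC => //; rewrite exprn_ge0.
set c := fnorm (Hrd *m w0).
have c0 : 0 <= c by apply: fnorm_ge0.
have cn0 : c != 0.
  by apply: contra Hw0n0 => /eqP /fnorm_eq0c ->.
have cp : 0 < c by rewrite lt_def cn0 c0.
have cr : c^* = c by apply: conj_Creal; apply: ger0_real.
have r1 : fnorm r = 1.
  by rewrite /r fnormZ -/c normfV (ger0_norm c0) mulVf.
have zc : sc (adjmx r *m Hrd *m w0) = c.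
  rewrite /r adjmxZ -scalemxAl -scalemxAl sc_scale -mulmxA sc_norm -/c.
  by rewrite conj_Creal ?rpredV ?ger0_real // expr2 mulKf.
set nw := fnorm w0.
have nw0 : 0 <= nw by apply: fnorm_ge0.
have ef0' : f0 = c - eps * nw by rewrite ef0.
have f0r : f0 \is Num.real by rewrite ef0' rpredB // ger0_real // mulr_ge0.
have [fpf0 fp0] : f0 <= fp /\ 0 <= fp.
  by rewrite /fp; case: (real_ge0P f0r) => hf; split => //; apply: ltW.
have eW : W = sqrtC K *: (w0 *m adjmx (Hsr *m b)) by rewrite /W adjmx_mul mulmxA.
split; [|split; [|split]].
- split; last by split.
  move=> i; rewrite diag_entry.
  have Wh : (W *m (Hsr *m b)) i 0 = sqrtC K * (w0 i 0 * hb2).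
    rewrite eW -scalemxAl -mulmxA mxE; congr (_ * _).
    rewrite mxE big_ord1; congr (_ * _); exact: sc_norm.
  have Wij : \sum_j `|W i j| ^+ 2 = K * `|w0 i 0| ^+ 2 * hb2.
    rewrite eW /hb2 fnorm_sqc mulr_sumr; apply: eq_bigr => j _.
    rewrite !mxE big_ord1 adjmxE !normrM norm_conjC !exprMn nk mulrA.
    by rewrite mxE.
  rewrite Wh Wij normrM exprMn nk normrM exprMn (ger0_norm hb2_0) (mulrA K).
  apply: feasC => //; first by rewrite exprn_ge0.
  by apply: exprn_ile1 => //; apply: hw0.
- move=> dH hdH; rewrite snrW eSNR.
  apply: G_monoC; [done|exact: ltW|done|done|done|exact: exprn_ge0|].
  rewrite ler_sqr ?nnegrE //.
  rewrite /fp; case: (real_ge0P f0r) => hf //.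
  rewrite mulmxDr mulmxDl sc_add zc.
  apply: le_trans (lerB_normD _ _).
  rewrite ef0' (ger0_norm c0); apply: lerB => //.
  apply: le_trans (CS3 _ _ _ _ _ _) _.
  by rewrite r1 mul1r ler_wpM2r.
- have [dH [hdH hcase]] := choose_dH _ _ _ Hrd r w0 eps r1 heps.
  exists dH; split => //; rewrite snrW eSNR.
  suff -> : `|sc (adjmx r *m (Hrd + dH) *m w0)| = fp by [].
  rewrite zc (ger0_norm c0) -/nw in hcase.
  case: hcase => [[h1 ->]|[h1 ->]].
    have hf0 : 0 <= f0 by rewrite ef0' subr_ge0.
    rewrite /fp; case: (real_ge0P f0r) => hf; first by rewrite ef0'.
    by rewrite (lt_geF hf) in hf0.
  have hf0 : f0 <= 0 by rewrite ef0' subr_le0.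
  rewrite normr0 /fp; case: (real_ge0P f0r) => hf //.
  by apply/eqP; rewrite eq_le hf hf0.
- move=> W' b' r' [hdiag [hb'1 hr'1]].
  set h' := Hsr *m b'.
  set hh := fnorm h' ^+ 2.
  have hh0 : 0 <= hh by rewrite exprn_ge0 // fnorm_ge0.
  have hhb : hh <= hb2 := hbound b' hb'1.
  have hPh' : 0 < Ps * hh + sr2.
    by apply: (lt_le_trans hsr); rewrite lerDr mulr_ge0 // ltW.
  set c2 := hh * Pr / (Ps * hh + sr2).
  have hc2 : 0 <= c2 by apply: divr_ge0; [apply: mulr_ge0 => //; apply: ltW | apply: ltW].
  set cc := sqrtC c2.
  have cc0 : 0 <= cc by rewrite sqrtC_ge0.
  have ecc : cc ^+ 2 = c2 by rewrite sqrtCK.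
  set w := cc^-1 *: (W' *m h').
  have hwf : feasible_aux w.
    move=> i; rewrite mxE normrM normfV (ger0_norm cc0).
    have [hz|hnz] := eqVneq hh 0.
      by rewrite /cc /c2 hz !mul0r sqrtC0 invr0 mul0r ler01.
    have hhp : 0 < hh by rewrite lt_def hnz hh0.
    have hcp : 0 < cc by rewrite sqrtC_gt0 divr_gt0 // mulr_gt0.
    rewrite mulrC ler_pdivrMr // mul1r.
    apply: sqrtC_le => //; rewrite ecc.
    have ey : (W' *m h') i 0 = sc (adjmx (adjmx (row i W')) *m h').
      by rewrite adjmxK /sc !mxE; apply: eq_bigr => j _; rewrite !mxE.
    have hdi := hdiag i; rewrite diag_entry -/h' in hdi.
    apply: (S6C _ _ _ _ _ _ _ hPs hPr hsr hhp _ _ hdi); first exact: exprn_ge0.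
      by apply: sumr_ge0 => j _; apply: exprn_ge0.
    have -> : \sum_j `|W' i j| ^+ 2 = fnorm (row i W') ^+ 2.
      by rewrite fnorm_sqr; apply: eq_bigr => j _; rewrite mxE.
    rewrite -exprMn ler_sqr ?nnegrE ?mulr_ge0 ?fnorm_ge0 //.
    by rewrite ey -fnorm_adj CS.
  have [dH [hdH hcase]] := choose_dH _ _ _ Hrd r' w eps hr'1 heps.
  exists dH; split => //.
  set x := sc (adjmx r' *m (Hrd + dH) *m w).
  have hxfp : `|x| <= fp.
    have hz : `|sc (adjmx r' *m Hrd *m w)| <= fnorm (Hrd *m w).
      by rewrite -mulmxA; apply: le_trans (CS _ _ r' (Hrd *m w)) _; rewrite hr'1 mul1r.
    have hfw : fnorm (Hrd *m w) - eps * fnorm w <= f0 by rewrite ef0; exact: hopt.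
    rewrite /x; case: hcase => [[_ ->]|[_ ->]]; last by rewrite normr0.
    apply: (le_trans _ fpf0); apply: (le_trans _ hfw); by rewrite lerD2r.
  have ht : `|x| ^+ 2 <= fp ^+ 2 by rewrite ler_sqr ?nnegrE.
  rewrite /snr eSNR.
  set g := adjmx r' *m (Hrd + dH) *m W'.
  rewrite -(mulmxA g) -/h'.
  apply: (UBC _ _ _ _ _ _ _ _ _ _ _ hPs hPr hsr hsd hh0 hhb _ ht).
  - exact: exprn_ge0.
  - by rewrite exprn_ge0 // fnorm_ge0.
  - exact: exprn_ge0.
  - move=> hnz.
    have hhp : 0 < hh by rewrite lt_def hnz hh0.
    have ccn0 : cc != 0.
      by rewrite sqrtC_eq0; apply: lt0r_neq0; rewrite divr_gt0 // mulr_gt0.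
    have eWh : W' *m h' = cc *: w by rewrite /w scalerA mulfV // scale1r.
    have -> : sc (g *m h') = cc * x by rewrite /g -mulmxA eWh -scalemxAr sc_scale.
    rewrite normrM exprMn (ger0_norm cc0) ecc /c2.
    by field; rewrite (lt0r_neq0 hPh').
  - have : `|sc (g *m h')| <= fnorm g * fnorm h'.
      by rewrite -{1}(adjmxK _ _ _ g) -(fnorm_adj _ _ _ g) CS.
    rewrite /hh -exprMn ler_sqr ?nnegrE ?mulr_ge0 ?fnorm_ge0 //.
Qed.
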